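(* Fix $\mathbf d=(d_1,\ldots,d_n)$ of positive integers, $|\mathbf d|=\sum d_i$. In the projective space $\mathbb{P}^{|\mathbf d|}$ with homogeneous coordinates $(\alpha,z)=((\alpha_{i,j})_{1\le i\le n,1\le j\le d_i},z)$, consider the system consisting of $h_1=\cdots=h_{|\mathbf d|-1}=0$ and $z^{|\mathbf d|}=\prod_{i,j}\alpha_{i,j}$, where $h_k$ is the coefficient of $t^k$ in $\tilde f(\mathbf x(t))$ for $\tilde f=\left(\prod_{i=1}^n(x_i+1)\right)-1$ and $x_i(t)=\left(\prod_{j=1}^{d_i}(\alpha_{i,j}t+1)\right)-1$. Then this system has exactly $|\mathbf d|!$ solutions, each of them simple (of multiplicity one).
   Context: This solution set is the fibre over the coefficient vector of $\tilde f$ of the projection from the incidence variety $\{(\alpha,z,\mathbf c): h_k(\mathbf c,\alpha)=0 \ (1\le k\le|\mathbf d|-1),\ z^{|\mathbf d|}=\prod\alpha_{i,j}\}$ to the space of coefficient vectors $\mathbf c$ of $f$. *)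

(* Defs.v *)
From HB Require Import structures.
From mathcomp Require Import all_boot all_order all_algebra.
From mathcomp Require Import mpoly.
Set Implicit Arguments. Unset Strict Implicit. Unset Printing Implicit Defensive.
Import Order.TTheory GRing.Theory Num.Theory.
Local Open Scope ring_scope.

Section Lemma35Defs.
Variable F : numClosedFieldType.
Variables (n : nat) (d : 'I_n -> nat).

Definition dsum : nat := (\sum_(i < n) d i)%N.

(* Homogeneous coordinates of P^{|d|}: |d|+1 variables indexed by 'I_(dsum.+1).
   alpha_{i,j} (0-based i < n, j < d i) is variable number (d_0+...+d_{i-1}) + j,
   and z is the last variable (number dsum). *)
Definition alpha_idx (i : 'I_n) (j : 'I_(d i)) : 'I_(dsum.+1) :=
  inord ((\sum_(i' < n | (i' < i)%N) d i') + j)%N.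
Definition z_idx : 'I_(dsum.+1) := ord_max.

Definition MP := {mpoly F[dsum.+1]}.

Definition alpha (i : 'I_n) (j : 'I_(d i)) : MP := 'X_(alpha_idx j).
Definition zvar : MP := 'X_z_idx.

Definition xt (i : 'I_n) : {poly MP} :=
  (\prod_(j < d i) ((alpha j)%:P * 'X + 1)) - 1.

Definition ftilde_xt : {poly MP} := (\prod_(i < n) (xt i + 1)) - 1.

Definition h (k : nat) : MP := ftilde_xt`_k.

(* The system: equations indexed by k < |d|: for k < |d|-1 it is h_{k+1} = 0,
   and the last one (k = |d|-1) is z^{|d|} - prod_{i,j} alpha_{i,j} = 0. *)
Definition sys (k : 'I_dsum) : MP :=
  if (k : nat) == dsum.-1 then zvar ^+ dsum - \prod_(i < n) \prod_(j < d i) alpha j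
  else h k.+1.

(* a point of F^{|d|+1} (representative of a projective point) *)
Definition pt_eval (v : 'rV[F]_(dsum.+1)) (p : MP) : F := p.@[fun l => v ord0 l].

Definition is_solution (v : 'rV[F]_(dsum.+1)) : Prop :=
  v != 0 /\ forall k : 'I_dsum, pt_eval v (sys k) = 0.

Definition proportional (v w : 'rV[F]_(dsum.+1)) : Prop :=
  exists2 c : F, c != 0 & w = c *: v.

Definition jacobian (v : 'rV[F]_(dsum.+1)) : 'M[F]_(dsum, dsum.+1) :=
  \matrix_(k < dsum, l < dsum.+1) pt_eval v (mderiv l (sys k)).

(* a solution of a system of |d| homogeneous equations in P^{|d|} is simple
   (multiplicity one) iff the Jacobian has full rank |d| there *)
Definition simple_solution (v : 'rV[F]_(dsum.+1)) : Prop :=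
  is_solution v /\ \rank (jacobian v) = dsum.

End Lemma35Defs.

(* Main.v *)
Require Import Defs.
From HB Require Import structures.
From mathcomp Require Import all_boot all_order all_algebra.
From mathcomp Require Import mpoly.
From mathcomp Require Import zify ring lra.
Import Order.TTheory GRing.Theory Num.Theory.
Local Open Scope ring_scope.
Set Implicit Arguments. Unset Strict Implicit. Unset Printing Implicit Defensive.

Lemma big_offset (R : Type) (idx : R) (op : Monoid.com_law idx) n (d : 'I_n -> nat) (F : nat -> R) :
  \big[op/idx]_(i < n) \big[op/idx]_(j < d i) F ((\sum_(i' < n | (i' < i)%N) d i') + j)%N
  = \big[op/idx]_(m < \sum_(i < n) d i) F m.
Proof.
elim: n d F => [|n IH] d F; first by rewrite !big_ord0.
rewrite big_ord_recl big_ord_recl big_split_ord; congr (op _ _).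
  by apply: eq_bigr => j _; rewrite big_pred0.
rewrite -(IH (fun i => d (lift ord0 i)) (fun m => F (d ord0 + m)%N)).
apply: eq_bigr => i _; apply: eq_bigr => j _; congr F.
rewrite big_mkcond big_ord_recl /= [in RHS]big_mkcond addnA; congr (_ + _ + _)%N.

Qed.

Section Generic.
Variables (F : numClosedFieldType) (N : nat).
Definition xv (m : nat) : {mpoly F[N.+1]} := 'X_(inord m).
Definition Pm : {poly {mpoly F[N.+1]}} := \prod_(m < N) ((xv m)%:P * 'X + 1).
Definition sysN (k : 'I_N) : {mpoly F[N.+1]} :=
  if (k : nat) == N.-1 then 'X_ord_max ^+ N - \prod_(m < N) xv m
  else (Pm - 1)`_k.+1.
End Generic.

Lemma sys_eq (F : numClosedFieldType) n (d : 'I_n -> nat) (k : 'I_(dsum d)) :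
  sys F k = sysN F k.
Proof.
rewrite /sys /sysN /h /ftilde_xt /zvar /z_idx.
case: ifP => _; [congr (_ - _) | congr (nth 0 (polyseq (_ - 1)) _)].
  by rewrite -(@big_offset _ _ _ _ d (fun m : nat => xv F (dsum d) m)).
rewrite /Pm -(@big_offset _ _ _ _ d (fun m : nat => (xv F (dsum d) m)%:P * 'X + 1)).
by apply: eq_bigr => i _; rewrite /xt subrK.
Qed.

Section Generic2.
Variables (F : numClosedFieldType) (N : nat).
Local Notation MPN := {mpoly F[N.+1]}.
Definition ev (v : 'rV[F]_(N.+1)) : MPN -> F := meval (fun l => v 0 l).
Definition Dv (v : 'rV[F]_(N.+1)) (l : 'I_N.+1) (p : MPN) : F := ev v (mderiv l p).
Definition av (v : 'rV[F]_(N.+1)) (m : nat) : F := v 0 (inord m).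
Definition Pa (a : nat -> F) : {poly F} := \prod_(m < N) ((a m)%:P * 'X + 1).

Lemma map_Pm v : map_poly (ev v) (Pm F N) = Pa (av v).
Proof.
rewrite /Pm /Pa rmorph_prod; apply: eq_bigr => m _.
rewrite rmorphD rmorphM /= map_polyC map_polyX rmorph1 /ev /xv.
by rewrite /= mevalXU.
Qed.

Lemma mderivXU (i l : 'I_N.+1) : mderiv l ('X_i : MPN) = (i == l)%:R.
Proof.
rewrite mderivX mnm1E; case: eqP => [->|_]; last by rewrite scale0r.
have ->: (U_(l) - U_(l))%MM = 0%MM by apply/mnmP => j; rewrite mnmBE subnn mnm0E.
by rewrite scale1r mpolyX0.
Qed.


Lemma DvM v l (p q : {poly MPN}) :
  map_poly (Dv v l) (p * q) =
  map_poly (Dv v l) p * map_poly (ev v) q + map_poly (ev v) p * map_poly (Dv v l) q.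
Proof.
have D0 : Dv v l 0 = 0 by rewrite /Dv raddf0 /ev meval0.
apply/polyP => i; rewrite coefD !coefM coef_map_id0 // coefM.
rewrite /Dv.
rewrite /ev (raddf_sum (mderiv l)) (raddf_sum (meval _)) -big_split; apply: eq_bigr => j _.
rewrite [LHS](congr1 (meval _) (mderivM l _ _)).
rewrite mevalD !mevalM !coef_map_id0 //; rewrite /Dv /ev ?raddf0 //.
Qed.

Lemma Dv1 v l : Dv v l 1 = 0.
Proof. by rewrite /Dv -mpolyC1 mderivC /ev meval0. Qed.

Lemma Dv0 v l : Dv v l 0 = 0.
Proof. by rewrite /Dv raddf0 /ev meval0. Qed.

Lemma ev_lin v m : map_poly (ev v) ((xv F N m)%:P * 'X + 1) = (av v m)%:P * 'X + 1.
Proof.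
rewrite rmorphD rmorphM /= map_polyC map_polyX rmorph1 /ev /xv.
by rewrite /= mevalXU.
Qed.

Lemma ev_prod v M : map_poly (ev v) (\prod_(0 <= m < M) ((xv F N m)%:P * 'X + 1)) =
  \prod_(0 <= m < M) ((av v m)%:P * 'X + 1).
Proof.
elim: M => [|M IH]; first by rewrite !big_nil rmorph1.
by rewrite !big_nat_recr //= rmorphM /= IH ev_lin.
Qed.

Lemma DvF v l m : (m <= N)%N ->
  map_poly (Dv v l) ((xv F N m)%:P * 'X + 1) = if m == val l then 'X else 0.
Proof.
move=> mN; apply/polyP => i; rewrite coef_map_id0 ?Dv0 // coefD coefCM coef1 coefX.
have HD : Dv v l (xv F N m) = (m == val l)%:R.
  rewrite /Dv /xv mderivXU -(inj_eq val_inj) /= inordK //.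
  by case: eqP => _; rewrite /ev ?meval0 // -mpolyC1 mevalC.
case: i => [|[|i]]; rewrite /= ?mulr0 ?mulr1 ?add0r ?addr0 ?Dv1 ?Dv0 ?HD;
  by case: eqP; rewrite ?coefX ?coef0.
Qed.

Lemma DvP v (l : 'I_N.+1) M : (M <= N)%N ->
  map_poly (Dv v l) (\prod_(0 <= m < M) ((xv F N m)%:P * 'X + 1)) =
  if (l < M)%N then 'X * \prod_(0 <= m < M | m != val l) ((av v m)%:P * 'X + 1)
  else 0.
Proof.
elim: M => [|M IH] HM.
  rewrite big_nil ltn0; apply/polyP => i; rewrite coef_map_id0 ?Dv0 // coef1 coef0.
  by case: (i == 0)%N; rewrite ?Dv1 ?Dv0.
rewrite big_nat_recr //= DvM IH ?(ltnW HM) // DvF ?(ltnW HM) //.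
rewrite (ev_lin v M) ev_prod.
rewrite [in RHS]big_mkcond big_nat_recr //= -big_mkcond /=.
case: (ltngtP l M) => [lt|gt|eq].
- by rewrite ltnS (ltnW lt) mulr0 addr0 -mulrA.
- by rewrite ltnS leqNgt gt mul0r mulr0 addr0.
- rewrite ltnS eq leqnn mulr1 mul0r add0r mulrC; congr (_ * _).
  rewrite [RHS]big_mkcond; apply: eq_big_nat => m /andP [_ mM]; by rewrite (ltn_eqF mM).
Qed.

Lemma size_lin (c : F) : (size ((c%:P * 'X + 1)%R) <= 2)%N.
Proof.
apply: leq_trans (size_polyD _ _) _; rewrite geq_max size_poly1 andbT.
apply: leq_trans (size_polyMleq _ _) _; rewrite size_polyX.
by have := size_polyC_leq1 c; case: (size _) => [|[|]].
Qed.

Lemma PaM_props (a : nat -> F) M :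
  let P := \prod_(0 <= m < M) ((a m)%:P * 'X + 1) in
  [/\ (size P <= M.+1)%N, P`_M = \prod_(0 <= m < M) a m & P`_0 = 1].
Proof.
elim: M => [|M IH] /=; first by rewrite !big_nil size_poly1 coef1.
case: IH => [Hs Hc H0]; rewrite !big_nat_recr //=; split.
- apply: leq_trans (size_polyMleq _ _) _.
  have := size_lin (a M); move: Hs.
  move: (size (\prod_(0 <= i < M) ((a i)%:P * 'X + 1))%R) (size ((a M)%:P * 'X + 1)%R) => s1 s2; rewrite -subn1; lia.
- rewrite mulrDr mulr1 coefD mulrA coefMX /= coefMC Hc.
  by rewrite [X in _ + X]nth_default ?addr0.
- by rewrite coef0M H0 coefD coefCM coefX coef1 mulr0 add0r mulr1.
Qed.

Lemma Pa_nat (a : nat -> F) : Pa a = \prod_(0 <= m < N) ((a m)%:P * 'X + 1).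
Proof. by rewrite /Pa big_mkord. Qed.

Definition Hcoef (a : nat -> F) := forall k, (0 < k < N)%N -> (Pa a)`_k = 0.

Lemma Pa_form (a : nat -> F) : (0 < N)%N -> Hcoef a ->
   Pa a = 1 + (\prod_(m < N) a m)%:P * 'X^N.
Proof.
move=> N0 H; have [Hs Hc H0] := PaM_props a N; rewrite -Pa_nat in Hs Hc H0.
apply/polyP => i; rewrite coefD coef1 coefCM coefXn.
case: (ltngtP i N) => [lt|gt|->].
- case: i lt => [|i] lt; first by rewrite H0 mulr0 addr0.
  by rewrite H ?lt // mulr0 addr0.
- rewrite nth_default ?(gtn_eqF (leq_ltn_trans (leq0n N) gt)) ?mulr0 ?addr0 //.
  exact: leq_trans Hs gt.
- by rewrite Hc (gtn_eqF N0) add0r mulr1 big_mkord.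
Qed.

Lemma Pa_horner (a : nat -> F) x : (Pa a).[x] = \prod_(m < N) (a m * x + 1).
Proof. by rewrite /Pa horner_prod; apply: eq_bigr => m _; rewrite !hornerE. Qed.

Lemma Pa_root (a : nat -> F) (l : 'I_N) : a l != 0 -> (Pa a).[- (a l)^-1] = 0.
Proof.
move=> nz; rewrite Pa_horner (bigD1 l) //= mulrN mulfV // addNr.
by rewrite mul0r.
Qed.

Lemma c0_all0 (a : nat -> F) : (0 < N)%N -> Hcoef a -> \prod_(m < N) a m = 0 ->
  forall m : 'I_N, a m = 0.
Proof.
move=> N0 H c0 m; apply/eqP/negP => /negP nz.
have := Pa_root nz; rewrite Pa_form // c0 !hornerE.
by move/eqP; rewrite oner_eq0.
Qed.

Lemma root_rel (a : nat -> F) (l : 'I_N) : (0 < N)%N -> Hcoef a -> a l != 0 ->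
  \prod_(m < N) a m = - (- a l) ^+ N.
Proof.
move=> N0 H nz; have := Pa_root nz; rewrite Pa_form // !hornerE => E.
have E2 : (- a l) ^+ N * (- (a l)^-1) ^+ N = 1.
  by rewrite -exprMn mulrN mulNr opprK mulfV // expr1n.
apply: (mulfI (x := (- (a l)^-1) ^+ N)).
  by rewrite expf_neq0 // oppr_eq0 invr_eq0.
rewrite mulrN (mulrC _ ((- a l) ^+ N)) E2 mulrC.
by apply/eqP; rewrite -addr_eq0 addrC E.
Qed.

Definition Qp (a : nat -> F) (l : 'I_N) := \prod_(m < N | m != l) ((a m)%:P * 'X + 1).

Lemma lin_neq0 (c : F) : c%:P * 'X + 1 != 0.
Proof.
apply/eqP => /(congr1 (fun p : {poly F} => p`_0)).
by rewrite coefD coefCM coefX coef1 coef0 mulr0 add0r => /eqP; rewrite oner_eq0.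
Qed.

Lemma Q_form (a : nat -> F) (l : 'I_N) : (0 < N)%N -> Hcoef a ->
  \prod_(m < N) a m != 0 -> Qp a l = \poly_(k < N) ((- a l) ^+ k).
Proof.
move=> N0 H c0.
have nz : a l != 0 by apply: contra c0 => /eqP al0; rewrite (bigD1 l) //= al0 mul0r.
apply: (mulfI (lin_neq0 (a l))).
have -> : ((a l)%:P * 'X + 1) * Qp a l = Pa a by rewrite /Pa (bigD1 l).
rewrite Pa_form // (root_rel N0 H nz).
set y := (- a l)%:P * 'X.
have -> : (a l)%:P * 'X + 1 = 1 - y by rewrite /y polyCN mulNr opprK addrC.
have -> : \poly_(k < N) (- a l) ^+ k = \sum_(k < N) 1 ^+ (N.-1 - k) * y ^+ k.
  rewrite poly_def; apply: eq_bigr => k _; rewrite expr1n mul1r /y.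
  by rewrite exprMn -rmorphXn /= mul_polyC.
rewrite -(subrXX 1 y N) expr1n /y exprMn -rmorphXn /=.
by rewrite polyCN mulNr.
Qed.

Lemma a_inj (a : nat -> F) (l l' : 'I_N) : (0 < N)%N -> Hcoef a ->
  \prod_(m < N) a m != 0 -> a l = a l' -> l = l'.
Proof.
move=> N0 H c0 E; apply/eqP/negP => /negP ne.
have nz : a l' != 0 by apply: contra c0 => /eqP al0; rewrite (bigD1 l') //= al0 mul0r.
have : (Qp a l).[- (a l')^-1] = 0.
  rewrite /Qp horner_prod (bigD1 l') 1?eq_sym //= !hornerE mulrN mulfV // addNr.
  by rewrite mul0r.
rewrite Q_form // horner_poly -E.
have -> : \sum_(i < N) (- a l) ^+ i * (- (a l)^-1) ^+ i = \sum_(i < N) 1.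
  apply: eq_bigr => i _; rewrite -exprMn mulrN mulNr opprK mulfV ?expr1n //.
  by rewrite E.
by rewrite sumr_const card_ord => /eqP; rewrite pnatr_eq0 (gtn_eqF N0).
Qed.

Lemma ev_sys_coef v (k : 'I_N) : (k : nat) != N.-1 ->
  ev v (sysN F k) = (Pa (av v))`_k.+1.
Proof.
move=> kN; rewrite /sysN (negbTE kN) -map_Pm coef_map_id0 /ev ?meval0 //.
by rewrite coefB coef1 subr0.
Qed.

Lemma ev_sys_last v (k : 'I_N) : (k : nat) = N.-1 ->
  ev v (sysN F k) = v 0 ord_max ^+ N - \prod_(m < N) av v m.
Proof.
move=> kN; rewrite /sysN kN eqxx /ev rmorphB rmorphXn rmorph_prod /= mevalXU.
by congr (_ - _); apply: eq_bigr => m _; rewrite /xv mevalXU.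
Qed.

Lemma jac_coef v (k : 'I_N) (l : 'I_N.+1) : (k : nat) != N.-1 ->
  ev v (mderiv l (sysN F k)) =
  if (l < N)%N then (\prod_(m < N | (m : nat) != l) ((av v m)%:P * 'X + 1))`_k
  else 0.
Proof.
move=> kN; rewrite /sysN (negbTE kN) coefB coef1 subr0.
have := coef_map_id0 (Pm F N) k.+1 (Dv0 v l); rewrite /Dv => <-.
rewrite /Pm -(big_mkord xpredT (fun m => (xv F N m)%:P * 'X + 1)) DvP //.
case: ifP => _; last by rewrite coef0.
rewrite coefXM /=.
by rewrite (big_mkord (fun m => m != val l)).
Qed.

Lemma mderiv_pow (l : 'I_N.+1) (p : MPN) k :
  mderiv l (p ^+ k.+1) = (p ^+ k * mderiv l p) *+ k.+1.
Proof.
elim: k => [|k IH]; first by rewrite expr0 mul1r.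
rewrite exprS [LHS](mderivM l p (p ^+ k.+1)) IH.
by rewrite mulrnAr mulrA -exprS (mulrC (mderiv l p)) -mulrS.
Qed.

Lemma mderiv_prod_xv M : (M <= N)%N ->
  mderiv ord_max (\prod_(0 <= m < M) xv F N m) = 0.
Proof.
elim: M => [|M IH] HM; first by rewrite big_nil -mpolyC1 mderivC.
rewrite big_nat_recr //= [LHS](mderivM _ _ _) IH ?(ltnW HM) // mul0r add0r.
rewrite /xv mderivXU -(inj_eq val_inj) /= inordK; last by apply: ltnW; rewrite ltnS.
by rewrite (ltn_eqF HM) mulr0.
Qed.

Lemma jac_last v (k : 'I_N) : (k : nat) = N.-1 -> (0 < N)%N ->
  ev v (mderiv ord_max (sysN F k)) = (v 0 ord_max ^+ N.-1) *+ N.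
Proof.
move=> kN N0; rewrite /sysN kN eqxx mderivB.
have := mderiv_prod_xv (leqnn N); rewrite big_mkord => ->; rewrite subr0.
have E := mderiv_pow ord_max ('X_ord_max) N.-1; rewrite (prednK N0) in E.
by rewrite E mderivXU eqxx mulr1 /ev raddfMn /= rmorphXn /= mevalXU.
Qed.

Definition solN (v : 'rV[F]_(N.+1)) := v != 0 /\ forall k : 'I_N, ev v (sysN F k) = 0.

Lemma sol_props v : (0 < N)%N -> solN v ->
  [/\ Hcoef (av v), v 0 ord_max ^+ N = \prod_(m < N) av v m,
      \prod_(m < N) av v m != 0 & v 0 ord_max != 0].
Proof.
move=> N0 [vnz Hs].
have Hc : Hcoef (av v).
  move=> k /andP [k0 kN]; have kN' : (k.-1 < N)%N by apply: leq_ltn_trans kN; exact: leq_pred.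
  have := Hs (Ordinal kN'); rewrite ev_sys_coef /= ?(prednK k0) //.
  by apply/eqP => E; move: kN; rewrite -(prednK k0) E prednK // ltnn.
have k0P : (N.-1 < N)%N by rewrite ltn_predL.
have Hz : v 0 ord_max ^+ N = \prod_(m < N) av v m.
  by have := Hs (Ordinal k0P); rewrite ev_sys_last // => /eqP; rewrite subr_eq0 => /eqP.
have cnz : \prod_(m < N) av v m != 0.
  apply/eqP => c0; move/negP: vnz; apply; apply/eqP/rowP => j; rewrite mxE.
  have all0 := c0_all0 N0 Hc c0.
  have z0 : v 0 ord_max = 0.
    by move: Hz; rewrite c0 => /eqP; rewrite expf_eq0 N0 /= => /eqP.
  case: (ltnP j N) => jN.
    by have := all0 (Ordinal jN); rewrite /av /= inord_val.
  have -> : j = ord_max by apply: val_inj => /=; apply/eqP; rewrite eqn_leq jN -ltnS ltn_ord.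
  exact: z0.
split => //; apply: contra cnz => /eqP z0.
by rewrite -Hz z0 expr0n (gtn_eqF N0).
Qed.

Definition jacN (v : 'rV[F]_(N.+1)) : 'M[F]_(N, N.+1) :=
  \matrix_(k < N, l < N.+1) ev v (mderiv l (sysN F k)).

Lemma jac_rank v : (0 < N)%N -> solN v -> \rank (jacN v) = N.
Proof.
move=> N0 sv; have [Hc Hz cnz znz] := sol_props N0 sv.
apply/eqP; apply: inj_row_free => u uJ.
have k0P : (N.-1 < N)%N by rewrite ltn_predL.
pose k0 : 'I_N := Ordinal k0P.
have Jmax k : k != k0 -> jacN v k ord_max = 0.
  by move=> kk0; rewrite mxE jac_coef ?ltnn.
have u0 : u 0 k0 = 0.
  have := congr1 (fun M : 'M_(1, N.+1) => M 0 ord_max) uJ; rewrite !mxE (bigD1 k0) //=.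
  rewrite big1 ?addr0 => [|k kk0]; last by rewrite Jmax // mulr0.
  rewrite mxE jac_last // => /eqP; rewrite mulf_eq0 mulrn_eq0 (gtn_eqF N0) /=.
  by rewrite expf_eq0 (negbTE znz) andbF orbF => /eqP.
have E (l : 'I_N) : \sum_(k < N) u 0 k * (- av v l) ^+ k = 0 :> F.
  have := congr1 (fun M : 'M_(1, N.+1) => M 0 (inord l)) uJ; rewrite !mxE => E0; rewrite -[RHS]E0.
  apply: eq_bigr => k _; rewrite mxE.
  have [->|kk0] := eqVneq k k0; first by rewrite u0 !mul0r.
  rewrite jac_coef // inordK ?ltn_ord; last by apply: ltnW; rewrite ltnS ltn_ord.
  change (u 0 k * (- av v l) ^+ k = u 0 k * (Qp (av v) l)`_k).
  by rewrite Q_form // coef_poly ltn_ord.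
pose U := \poly_(k < N) u 0 (insubd k0 k).
have Uroot (l : 'I_N) : root U (- av v l).
  rewrite /root horner_poly; apply/eqP; rewrite -[RHS](E l).
  by apply: eq_bigr => k _; rewrite valKd.
have U0 : U = 0.
  apply/eqP; apply: contraT => Unz.
  have := max_poly_roots Unz (rs := map (fun l : 'I_N => - av v l) (enum 'I_N)).
  rewrite size_map size_enum_ord ltnNge size_poly /=; apply.
    by apply/allP => x /mapP [l _ ->].
  rewrite map_inj_uniq ?enum_uniq // => l l' /oppr_inj El.
  exact: a_inj N0 Hc cnz El.
apply/rowP => k; rewrite !mxE.
have := congr1 (fun p : {poly F} => p`_k) U0; rewrite coef_poly ltn_ord valKd coef0.
by [].
Qed.

Definition rowof (s : seq F) : 'rV[F]_(N.+1) := \row_(j < N.+1) nth 1 s j.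

Lemma av_rowof s m : (m < N)%N -> av (rowof s) m = nth 1 s m.
Proof. by move=> mN; rewrite /av mxE inordK // ltnW. Qed.

Lemma Pa_rowof s : size s = N -> Pa (av (rowof s)) = \prod_(x <- s) (x%:P * 'X + 1).
Proof.
move=> sz; rewrite (big_nth 1) sz big_mkord /Pa.
by apply: eq_bigr => m _; rewrite av_rowof.
Qed.

Lemma sol_of_Pa (v : 'rV[F]_(N.+1)) : (0 < N)%N -> v 0 ord_max = 1 -> Pa (av v) = 'X^N + 1 -> solN v.
Proof.
move=> N0 z1 HP; split.
  by apply/eqP => v0; move: z1; rewrite v0 mxE => /eqP; rewrite eq_sym oner_eq0.
move=> k; have [kN|kN] := eqVneq (k : nat) N.-1.
  rewrite ev_sys_last // z1 expr1n.
  have [_ Hc _] := PaM_props (av v) N; rewrite -Pa_nat big_mkord HP in Hc.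
  by rewrite -Hc coefD coefXn coef1 eqxx (gtn_eqF N0) addr0 subrr.
rewrite ev_sys_coef // HP coefD coefXn coef1 /=.
have : (k.+1 < N)%N.
  by move: (ltn_ord k) kN; move: (k : nat) => k' ; lia.
by move=> /ltn_eqF ->; rewrite addr0.
Qed.

Definition propN (v w : 'rV[F]_(N.+1)) := exists2 c : F, c != 0 & w = c *: v.

Lemma main_gen : (0 < N)%N ->
  exists S : seq 'rV[F]_(N.+1),
    [/\ size S = N`!,
        (forall v, v \in S -> solN v /\ \rank (jacN v) = N),
        (forall i j : nat, (i < size S)%N -> (j < size S)%N ->
            propN (nth 0 S i) (nth 0 S j) -> i = j)
      & (forall v, solN v -> exists2 w, w \in S & propN w v)].
Proof.
move=> N0.
pose q : {poly F} := 'X^N + 1%:P.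
have [rs Hq] := closed_field_poly_normal q.
rewrite lead_coefXnaddC // scale1r in Hq.
have Hsz : size rs = N.
  by have := congr1 (fun p : {poly F} => size p) Hq; rewrite /= size_XnaddC // size_prod_XsubC => -[].
have q0 : q.[0] = 1 by rewrite !hornerE expr0n (gtn_eqF N0) add0r.
have rnz r : r \in rs -> r != 0.
  move=> rin; apply/eqP => r0.
  have : root q r by rewrite Hq root_prod_XsubC.
  by rewrite /root r0 q0 oner_eq0.
pose w := map (fun r => - r^-1) rs.
have Pw : \prod_(x <- w) (x%:P * 'X + 1) = q.
  have E1 : q = (\prod_(r <- rs) (- r))%:P * \prod_(x <- w) (x%:P * 'X + 1).
    rewrite {1}Hq big_map rmorph_prod -big_split /=.
    rewrite big_seq_cond [RHS]big_seq_cond; apply: eq_bigr => r /andP [rin _].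
    rewrite mulrDr mulr1 mulrA -polyCM mulrNN mulfV ?rnz // mul1r polyCN.
    by rewrite addrC.
  have E2 : \prod_(r <- rs) (- r) = 1.
    have Pw0 : (\prod_(x <- w) (x%:P * 'X + 1)).[0] = 1.
      rewrite horner_prod big1_seq // => x _; by rewrite !hornerE.
    have := congr1 (fun p : {poly F} => p.[0]) E1; rewrite /= q0 hornerM hornerC.
    by rewrite Pw0 mulr1.
  by rewrite {1}E1 E2 polyC1 mul1r.
have szw : size w = N by rewrite size_map.
have Psol s : perm_eq s w -> solN (rowof s).
  move=> pe; have szs : size s = N by rewrite (perm_size pe).
  apply: sol_of_Pa => //; first by rewrite mxE nth_default ?szs.
  by rewrite Pa_rowof // (perm_big _ pe) Pw /q polyC1.
have uw : uniq w.
  apply/(uniqP 1) => i j; rewrite !inE szw => iN jN E.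
  have [Hc _ cnz _] := sol_props N0 (Psol w (perm_refl w)).
  have := @a_inj _ (Ordinal iN) (Ordinal jN) N0 Hc cnz.
  by rewrite /= !av_rowof // => /(_ E) [].
exists (map rowof (permutations w)); split.
- by rewrite size_map size_permutations // szw.
- move=> v /mapP [s]; rewrite mem_permutations => pe ->.
  by split; [exact: Psol | apply: jac_rank => //; exact: Psol].
- move=> i j iS jS [c c0]; rewrite size_map in iS jS.
  rewrite !(nth_map [::]) // => E.
  have szp k : (k < size (permutations w))%N -> size (nth [::] (permutations w) k) = N.
    move=> kS; have := mem_nth [::] kS; rewrite mem_permutations => pe.
    by rewrite (perm_size pe).
  have c1 : c = 1.
    have := congr1 (fun M : 'M_(1, N.+1) => M 0 ord_max) E; rewrite !mxE.
    rewrite nth_default; last by rewrite szp.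
    rewrite nth_default; last by rewrite szp.
    by rewrite mulr1 => /esym.
  move: E; rewrite c1 scale1r => E.
  apply/eqP; rewrite -(nth_uniq [::] iS jS (permutations_uniq w)); apply/eqP.
  apply: (@eq_from_nth _ 1); first by rewrite !szp.
  move=> k; rewrite szp // => kN.
  have := congr1 (fun M : 'M_(1, N.+1) => M 0 (inord k)) E; rewrite !mxE inordK; last exact: ltnW.
  by move=> ->.
- move=> v sv; have [Hc Hz cnz znz] := sol_props N0 sv.
  set z := v 0 ord_max in Hz znz.
  pose w' := mkseq (fun m => av v m / z) N.
  have anz (m : 'I_N) : av v m != 0.
    by apply: contra cnz => /eqP am0; rewrite (bigD1 m) //= am0 mul0r.
  have uw' : uniq w'.
    apply/(uniqP 1) => i j; rewrite !inE size_mkseq => iN jN.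
    rewrite !nth_mkseq // => /(mulIf (invr_neq0 znz)) E.
    by have := @a_inj _ (Ordinal iN) (Ordinal jN) N0 Hc cnz E => -[].
  have sub : {subset w' <= w}.
    move=> x /mapP [m]; rewrite mem_iota add0n => /andP [_ mN] ->.
    pose mo : 'I_N := Ordinal mN.
    apply/mapP; exists (- (z / av v m)).
      rewrite -root_prod_XsubC -Hq /root !hornerE.
      have := Pa_root (anz mo); rewrite Pa_form // -Hz !hornerE /= => E.
      by rewrite -exprMn mulrN in E; rewrite addrC E.
    by rewrite invrN opprK invf_div.
  have pe : perm_eq w' w.
    apply: uniq_perm => //; have [] := uniq_min_size uw' sub.
      by rewrite szw size_mkseq.
    by [].
  exists (rowof w'); first by apply/mapP; exists w'; rewrite ?mem_permutations.
  exists z => //; apply/rowP => j; rewrite !mxE.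
  case: (ltnP j N) => jN.
    rewrite nth_mkseq // mulrC divfK //.
    by rewrite /av; congr (v 0 _); apply: val_inj; rewrite /= inordK // ltnW.
  rewrite nth_default ?size_mkseq // mulr1 /z; congr (v 0 _).
  by apply: val_inj => /=; apply/eqP; rewrite eqn_leq jN -ltnS ltn_ord.
Qed.
End Generic2.

Theorem lemma3p5 (F : numClosedFieldType) (n : nat) (d : 'I_n -> nat)
  (dpos : forall i, (0 < d i)%N) :
  exists S : seq 'rV[F]_((dsum d).+1),
    [/\ size S = (dsum d)`!,
        (forall v, v \in S -> simple_solution v),
        (forall i j : nat, (i < size S)%N -> (j < size S)%N ->
            proportional (nth 0 S i) (nth 0 S j) -> i = j)
      & (forall v, is_solution v -> exists2 w, w \in S & proportional w v)].
Proof.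
have Esol (v : 'rV[F]_((dsum d).+1)) : is_solution v <-> solN v.
  rewrite /is_solution /solN; split => -[vnz H]; split => // k; have := H k;
  by rewrite /pt_eval sys_eq.
have Ejac (v : 'rV[F]_((dsum d).+1)) : jacobian v = jacN v.
  by apply/matrixP => k l; rewrite !mxE sys_eq.
case: (posnP (dsum d)) => [N0|N0]; last first.
  have [S [H1 H2 H3 H4]] := main_gen F N0; exists S; split => //.
    move=> v vS; have [sv rv] := H2 v vS; split; first exact/Esol.
    by rewrite Ejac.
  by move=> v /Esol sv; exact: H4 v sv.
have Ej (j : 'I_((dsum d).+1)) : j = ord_max.
  by apply: val_inj => /=; have := ltn_ord j; move: N0; lia.
exists [:: const_mx 1]; split.
- by rewrite N0.
- move=> v; rewrite inE => /eqP ->; split.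
    split.
      by apply/eqP => /matrixP /(_ 0 ord_max); rewrite !mxE => /eqP; rewrite oner_eq0.
    by move=> k; have := ltn_ord k; rewrite [X in (_ < X)%N]N0.
  apply/eqP; rewrite eqn_leq rank_leq_row /= [X in (X <= _)%N]N0.
  by [].
- by move=> [|i] [|j].
- move=> v [vnz _]; exists (const_mx 1); rewrite ?inE //.
  exists (v 0 ord_max).
    apply: contra vnz => /eqP z0; apply/eqP/rowP => j.
    by rewrite (Ej j) z0 mxE.
  by apply/rowP => j; rewrite !mxE mulr1 (Ej j).
Qed.
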